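(* Let $R$ be an almost Dedekind domain and $\mathcal{M}$ its maximal space with the inverse topology. Then: (a) if $\mathcal{M}$ is countable, then $\mathcal{M}$ is scattered; (b) if $\mathcal{M}$ is scattered, then $R$ is SP-scattered.
   Context: $R$ almost Dedekind: $R_M$ is a DVR for each maximal $M$; $K$ quotient field. $\mathcal{M}$ is $\mathrm{Max}(R)$ with the inverse topology (restriction of the coarsest topology on $\mathrm{Spec}(R)$ in which Zariski-open Zariski-compact sets are closed). A space $X$ is scattered if $\partial^\alpha(X)=\emptyset$ for some ordinal $\alpha$, where $\partial^0(X)=X$, $\partial^{\gamma+1}(X)$ is the set of non-isolated points of $\partial^\gamma(X)$, and $\partial^\lambda(X)=\bigcap_{\beta<\lambda}\partial^\beta(X)$ for limit $\lambda$. A maximal ideal $M$ of an almost Dedekind domain $A$ is critical if every finitely generated ideal $J\subseteq M$ satisfies $J\subseteq N^2$ for some maximal $N$; $\mathrm{Crit}(A)$ is the set of these. Recursively: $\mathrm{Crit}_0(R)=\mathrm{Max}(R)$, $T_0=R$; $\mathrm{Crit}_{\gamma+1}(R)=\{P\in\mathrm{Max}(R)\mid PT_\gamma\in\mathrm{Crit}(T_\gamma)\}$; $\mathrm{Crit}_\lambda(R)=\bigcap_{\gamma<\lambda}\mathrm{Crit}_\gamma(R)$ for limit $\lambda$; $T_\alpha=\bigcap\{R_P\mid P\in\mathrm{Crit}_\alpha(R)\}$ ($=K$ if empty). $R$ is SP-scattered if $\mathrm{Crit}_\alpha(R)=\emptyset$ for some ordinal $\alpha$. *)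

(* Defs.v *)
From mathcomp Require Import all_boot all_order all_algebra.
From mathcomp Require Import classical_sets.
Set Implicit Arguments. Unset Strict Implicit. Unset Printing Implicit Defensive.
Import Order.TTheory GRing.Theory Num.Theory.
Local Open Scope ring_scope.
Local Open Scope classical_set_scope.

(* Throughout, K is a field and rings are subrings A of K (as subsets). *)
Section Defs.
Variable K : fieldType.

Definition subring (A : set K) : Prop :=
  A 0 /\ A 1 /\ (forall x y, A x -> A y -> A (x - y)) /\
  (forall x y, A x -> A y -> A (x * y)).

Definition is_frac_field (A : set K) : Prop :=
  forall x : K, exists a b, A a /\ A b /\ b != 0 /\ x = a / b.

Definition ideal (A I : set K) : Prop :=
  I `<=` A /\ I 0 /\ (forall x y, I x -> I y -> I (x + y)) /\
  (forall a x, A a -> I x -> I (a * x)).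

Definition prime_ideal (A P : set K) : Prop :=
  ideal A P /\ P <> A /\ (forall x y, A x -> A y -> P (x * y) -> P x \/ P y).

Definition maximal_ideal (A M : set K) : Prop :=
  ideal A M /\ M <> A /\ (forall J, ideal A J -> M `<=` J -> J = M \/ J = A).

Definition ideal_gen (A : set K) (s : seq K) : set K :=
  [set x | exists r : seq K, size r = size s /\ (forall a, a \in r -> A a) /\
     x = \sum_(i < size s) r`_i * s`_i].

Definition fin_gen (A J : set K) : Prop :=
  exists s : seq K, (forall a, a \in s -> A a) /\ J = ideal_gen A s.

Definition ideal_ext (T I : set K) : set K :=
  [set x | exists s : seq (K * K), (forall z, z \in s -> T z.1 /\ I z.2) /\
     x = \sum_(z <- s) z.1 * z.2].

Definition ideal_sq (N : set K) : set K :=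
  [set x | exists s : seq (K * K), (forall z, z \in s -> N z.1 /\ N z.2) /\
     x = \sum_(z <- s) z.1 * z.2].

Definition localization (A P : set K) : set K :=
  [set x | exists a b, A a /\ A b /\ ~ P b /\ x = a / b].

(** Discrete valuation ring: V is the valuation ring of a (normalized)
    discrete valuation v : K^* -> Z (surjective), K being the fraction field. *)
Definition is_DVR (V : set K) : Prop :=
  exists v : K -> int,
    (forall x y, x != 0 -> y != 0 -> v (x * y) = v x + v y) /\
    (forall x y, x != 0 -> y != 0 -> x + y != 0 ->
        Order.min (v x) (v y) <= v (x + y)) /\
    (exists t, t != 0 /\ v t = 1) /\
    (forall x, V x <-> (x = 0 \/ 0 <= v x)).

Definition almost_dedekind (A : set K) : Prop :=
  forall M, maximal_ideal A M -> is_DVR (localization A M).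

Definition Spec (A : set K) : set (set K) := [set P | prime_ideal A P].
Definition Max (A : set K) : set (set K) := [set M | maximal_ideal A M].

Definition zariski_open (A : set K) (U : set (set K)) : Prop :=
  exists I, ideal A I /\ U = [set P | Spec A P /\ ~ (I `<=` P)].

Definition zariski_compact (A : set K) (U : set (set K)) : Prop :=
  forall C : set (set (set K)), (forall V, C V -> zariski_open A V) ->
    U `<=` \bigcup_(V in C) V ->
    exists s : seq (set (set K)), (forall V, V \in s -> C V) /\
      U `<=` [set P | exists V, V \in s /\ V P].

Definition is_topology_on (T : Type) (X : set T) (tau : set (set T)) : Prop :=
  (forall O, tau O -> O `<=` X) /\ tau X /\
  (forall F : set (set T), F `<=` tau -> tau (\bigcup_(O in F) O)) /\
  (forall O1 O2, tau O1 -> tau O2 -> tau (O1 `&` O2)).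

(** Inverse topology on Spec(A): the coarsest topology on Spec(A) in which
    the Zariski-open Zariski-compact sets are closed. *)
Definition inverse_open (A : set K) (O : set (set K)) : Prop :=
  forall tau, is_topology_on (Spec A) tau ->
    (forall U, zariski_open A U -> zariski_compact A U ->
        tau [set P | Spec A P /\ ~ U P]) ->
    tau O.

Definition maxspace_open (A : set K) (O' : set (set K)) : Prop :=
  exists O, inverse_open A O /\ O' = O `&` Max A.

End Defs.

(** Well-ordered index types (models of ordinals) *)
Definition is_wellorder (I : Type) (lt : I -> I -> Prop) : Prop :=
  well_founded lt /\ (forall x y z, lt x y -> lt y z -> lt x z) /\
  (forall x y, lt x y \/ x = y \/ lt y x).

Definition is_pred_of (I : Type) (lt : I -> I -> Prop) (j i : I) : Prop :=
  lt j i /\ ~ (exists k, lt j k /\ lt k i).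

(** Cantor-Bendixson derivatives along a well-order:
    D i = X if i is least, D (j+1) = non-isolated points of D j,
    D i = intersection of D j (j < i) at limits. *)
Definition derivative_seq (T : Type) (X : set T) (isopen : set T -> Prop)
  (I : Type) (lt : I -> I -> Prop) (D : I -> set T) : Prop :=
  forall i,
    (forall j, is_pred_of lt j i ->
       D i = [set x | D j x /\
                forall O, isopen O -> O x -> exists y, D j y /\ O y /\ y <> x]) /\
    (~ (exists j, is_pred_of lt j i) ->
       D i = [set x | X x /\ forall j, lt j i -> D j x]).

Definition scattered (T : Type) (X : set T) (isopen : set T -> Prop) : Prop :=
  exists (I : Type) (lt : I -> I -> Prop) (D : I -> set T) (i : I),
    is_wellorder lt /\ derivative_seq X isopen lt D /\ D i = set0.

Section Crit.
Variable K : fieldType.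

Definition Crit (A : set K) : set (set K) :=
  [set M | maximal_ideal A M /\
     forall J, ideal A J -> fin_gen A J -> J `<=` M ->
       exists N, maximal_ideal A N /\ J `<=` ideal_sq N].

(** T = intersection of R_P for P in C (= K if C is empty) *)
Definition overring (R : set K) (C : set (set K)) : set K :=
  [set x | forall P, C P -> localization R P x].

Definition crit_seq (R : set K) (I : Type) (lt : I -> I -> Prop)
  (C : I -> set (set K)) : Prop :=
  forall i,
    (forall j, is_pred_of lt j i ->
       C i = [set P | maximal_ideal R P /\
                Crit (overring R (C j)) (ideal_ext (overring R (C j)) P)]) /\
    (~ (exists j, is_pred_of lt j i) ->
       C i = [set P | maximal_ideal R P /\ forall j, lt j i -> C j P]).

Definition SP_scattered (R : set K) : Prop :=
  exists (I : Type) (lt : I -> I -> Prop) (C : I -> set (set K)) (i : I),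
    is_wellorder lt /\ crit_seq R lt C /\ C i = set0.

Definition countable_set (T : Type) (X : set T) : Prop :=
  exists f : T -> nat, forall x y, X x -> X y -> f x = f y -> x = y.

End Crit.

(* Main.v *)
Require Import Defs.
From mathcomp Require Import all_boot all_order all_algebra.
From mathcomp Require Import classical_sets boolp.
From mathcomp Require Import ring zify.
Set Implicit Arguments. Unset Strict Implicit. Unset Printing Implicit Defensive.
Import Order.TTheory GRing.Theory Num.Theory.
Local Open Scope ring_scope.
Local Open Scope classical_set_scope.
Lemma zorn_helper (T : Type) (Phi : set T -> Prop) (A0 : set T) :
  Phi A0 -> (exists t, A0 t) ->
  (forall F : set (set T), F `<=` Phi -> total_on F subset -> (exists X, F X) ->
     Phi (\bigcup_(X in F) X)) ->
  exists A, Phi A /\ forall B, A `<` B -> ~ Phi B.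
Proof.
move=> h0 [t0 ht0] hch.
have [|A [hPA hmax]] := @Zorn_bigcup T (fun A => A = set0 \/ Phi A).
  move=> F hF htot; case: (pselect (exists X, F X /\ Phi X)) => h.
    right; have -> : \bigcup_(X in F) X = \bigcup_(X in F `&` Phi) X.
      apply/seteqP; split => y [X hX hy]; last by exists X => //; case: hX.
      exists X => //; split => //; case: (hF X hX) => // eX.
      by move: hy; rewrite eX.
    apply: hch; first by move=> X [].
      by move=> X Y [hX _] [hY _]; apply: htot.
    by case: h => X [hX hX']; exists X.
  left; apply/seteqP; split => // y [X hX hy]; case: (hF X hX) => [eX|hX'].
    by move: hy; rewrite eX.
  by exfalso; apply: h; exists X.
case: hPA => [eA|hA].
  by exfalso; apply: (hmax A0); [rewrite eA; split=> // /(_ t0 ht0)|right].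
by exists A; split=> // B hB hPB; apply: (hmax B hB); right.
Qed.

Section Alg.
Variable K : fieldType.
Implicit Types (A I J P M : set K) (x y a b : K).

Section SR.
Variable A : set K.
Hypothesis hA : subring A.

Lemma sr0 : A 0. Proof. by case: hA. Qed.
Lemma sr1 : A 1. Proof. by case: hA => _ []. Qed.
Lemma srB x y : A x -> A y -> A (x - y). Proof. by case: hA => _ [_ []] h _; apply: h. Qed.
Lemma srM x y : A x -> A y -> A (x * y). Proof. by case: hA => _ [_ []] _ h; apply: h. Qed.
Lemma srN x : A x -> A (- x).
Proof. by move=> h; have := srB sr0 h; rewrite sub0r. Qed.
Lemma srD x y : A x -> A y -> A (x + y).
Proof. by move=> h1 h2; have := srB h1 (srN h2); rewrite opprK. Qed.
Lemma srX x n : A x -> A (x ^+ n).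
Proof. by move=> h; elim: n => [|n IH]; [rewrite expr0; exact: sr1| rewrite exprS; exact: srM]. Qed.

Section Id.
Variable I : set K.
Hypothesis hI : ideal A I.
Lemma idl_sub : I `<=` A. Proof. by case: hI. Qed.
Lemma idl0 : I 0. Proof. by case: hI => _ []. Qed.
Lemma idlD x y : I x -> I y -> I (x + y). Proof. by case: hI => _ [_ []] h _; apply: h. Qed.
Lemma idlM a x : A a -> I x -> I (a * x). Proof. by case: hI => _ [_ []] _ h; apply: h. Qed.
Lemma idlMr a x : A a -> I x -> I (x * a). Proof. by move=> h1 h2; rewrite mulrC; apply: idlM. Qed.
Lemma idlN x : I x -> I (- x).
Proof. by move=> h; rewrite -mulN1r; apply: idlM => //; apply: srN; apply: sr1. Qed.
Lemma idlB x y : I x -> I y -> I (x - y).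
Proof. by move=> h1 h2; apply: idlD => //; apply: idlN. Qed.
Lemma idl_one : I 1 -> I = A.
Proof.
move=> h1; apply/seteqP; split; first exact: idl_sub.
by move=> a ha; rewrite -(mulr1 a); apply: idlM.
Qed.
Lemma idl_sum (T : eqType) (s : seq T) (F : T -> K) :
  (forall z, z \in s -> I (F z)) -> I (\sum_(z <- s) F z).
Proof.
elim: s => [|z s IH] h; first by rewrite big_nil; exact: idl0.
rewrite big_cons; apply: idlD; first by apply: h; rewrite inE eqxx.
by apply: IH => w hw; apply: h; rewrite inE hw orbT.
Qed.
End Id.

Lemma sr_sum (T : eqType) (s : seq T) (F : T -> K) :
  (forall z, z \in s -> A (F z)) -> A (\sum_(z <- s) F z).
Proof.
elim: s => [|z s IH] h; first by rewrite big_nil; exact: sr0.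
rewrite big_cons; apply: srD; first by apply: h; rewrite inE eqxx.
by apply: IH => w hw; apply: h; rewrite inE hw orbT.
Qed.

Lemma ideal_full : ideal A A.
Proof. split=> //; split; first exact: sr0. split; [exact: srD|exact: srM]. Qed.

Definition addelt M x := [set y | exists m r, M m /\ A r /\ y = m + r * x].

Lemma addelt_ideal M x : ideal A M -> A x -> ideal A (addelt M x).
Proof.
move=> hM hx; split.
  by move=> y [m [r [hm [hr ->]]]]; apply: srD; [exact: idl_sub hM _ hm| exact: srM].
split; first by exists 0, 0; split; [exact: idl0|split; [exact: sr0|ring]].
split.
  move=> y z [m [r [hm [hr ->]]]] [m' [r' [hm' [hr' ->]]]].
  exists (m + m'), (r + r'); split; first exact: idlD.
  split; [exact: srD | ring].
move=> a y ha [m [r [hm [hr ->]]]]; exists (a * m), (a * r); split; first exact: idlM.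
split; [exact: srM | ring].
Qed.

Lemma addelt_sub M x : ideal A M -> A x -> M `<=` addelt M x.
Proof. move=> hM hx m hm; exists m, 0; split=> //; split; [exact: sr0|ring]. Qed.

Lemma addelt_x M x : ideal A M -> A x -> addelt M x x.
Proof. move=> hM hx; exists 0, 1; split; [exact: idl0|split; [exact: sr1|ring]]. Qed.

Lemma max_elt M x : maximal_ideal A M -> A x -> ~ M x ->
  exists m r, M m /\ A r /\ 1 = m + r * x.
Proof.
move=> [hM [hne hmax]] hx hnx.
have [e|e] := hmax _ (addelt_ideal hM hx) (addelt_sub hM hx).
  by exfalso; apply: hnx; rewrite -e; apply: addelt_x.
have : addelt M x 1 by rewrite e; exact: sr1.
by move=> [m [r [hm [hr h]]]]; exists m, r.
Qed.

Lemma max_not1 M : maximal_ideal A M -> ~ M 1.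
Proof. by move=> [hM [hne _]] h1; apply: hne; apply: idl_one. Qed.

Lemma max_prime M : maximal_ideal A M -> prime_ideal A M.
Proof.
move=> hmax; have [hM [hne _]] := hmax; split=> //; split=> // x y hx hy hxy.
case: (pselect (M x)) => hmx; [by left|right].
have [m [r [hm [hr e]]]] := max_elt hmax hx hmx.
have -> : y = m * y + r * (x * y) by rewrite mulrA -mulrDl -e mul1r.
apply: idlD => //; [exact: idlMr | exact: idlM].
Qed.

Lemma prime_not1 P : prime_ideal A P -> ~ P 1.
Proof. by move=> [hP [hne _]] h1; apply: hne; apply: idl_one. Qed.

Lemma prime_X P x n : prime_ideal A P -> A x -> P (x ^+ n) -> P x.
Proof.
move=> hP hx; elim: n => [|n IH]; first by rewrite expr0 => /(prime_not1 hP).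
rewrite exprS => h; have [_ [_ hpr]] := hP.
by case: (hpr _ _ hx (srX n hx) h) => // /IH.
Qed.

End SR.
Section SR2.
Variable A : set K.
Hypothesis hA : subring A.

Lemma chain_ideal (F : set (set K)) : (forall X, F X -> ideal A X) ->
  total_on F subset -> (exists X, F X) -> ideal A (\bigcup_(X in F) X).
Proof.
move=> hF htot [X0 hX0]; split; first by move=> y [X hX hy]; exact: (idl_sub (hF X hX) hy).
split; first by exists X0 => //; apply: idl0 (hF _ hX0).
split.
  move=> y z [X hX hy] [Y hY hz]; case: (htot X Y hX hY) => hXY.
    by exists Y => //; apply: idlD (hF _ hY) _ _ _ hz; apply: hXY.
  by exists X => //; apply: idlD (hF _ hX) _ _ hy _; apply: hXY.
by move=> a y ha [X hX hy]; exists X => //; apply: idlM (hF _ hX) _ _ ha hy.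
Qed.

Lemma zorn_avoid L x : ideal A L -> A x -> (forall n, ~ L (x ^+ n)) ->
  exists P, (ideal A P /\ L `<=` P /\ forall n, ~ P (x ^+ n)) /\
    forall B, P `<` B -> ~ (ideal A B /\ L `<=` B /\ forall n, ~ B (x ^+ n)).
Proof.
move=> hL hx hn; apply: (@zorn_helper _ _ L).
- by split=> //; split.
- by exists 0; apply: idl0 hL.
move=> F hF htot hne; split.
  by apply: chain_ideal => // X /hF [].
split.
  by case: hne => X hX y hy; exists X => //; case: (hF X hX) => _ [+ _]; apply.
by move=> n [X hX hxn]; case: (hF X hX) => _ [_ h]; apply: (h n).
Qed.

Lemma prime_avoid L x : ideal A L -> A x -> (forall n, ~ L (x ^+ n)) ->
  exists P, prime_ideal A P /\ L `<=` P /\ forall n, ~ P (x ^+ n).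
Proof.
move=> hL hx hn; have [P [[hP [hLP hPn]] hmax]] := zorn_avoid hL hx hn.
exists P; split=> //; split=> //; split.
  by move=> e; apply: (hPn 0%N); rewrite expr0 e; exact: sr1.
move=> a b ha hb hab.
case: (pselect (P a)) => hPa; first by left.
case: (pselect (P b)) => hPb; first by right.
exfalso.
have big c : A c -> ~ P c -> exists n p r, P p /\ A r /\ x ^+ n = p + r * c.
  move=> hc hPc; apply: contrapT => hno.
  apply: (hmax (addelt A P c)).
    split; first exact: (addelt_sub hA).
    by move=> hsub; apply: hPc; apply: hsub; apply: (addelt_x hA).
  split; first exact: (addelt_ideal hA).
  split; first by move=> y /hLP; apply: (addelt_sub hA).
  move=> n [p [r [hp [hr e]]]]; apply: hno; by exists n, p, r.
have [n [p1 [r1 [hp1 [hr1 e1]]]]] := big a ha hPa.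
have [m [p2 [r2 [hp2 [hr2 e2]]]]] := big b hb hPb.
apply: (hPn (n + m)%N).
have -> : x ^+ (n + m) = p1 * x ^+ m + (r1 * a) * p2 + (r1 * r2) * (a * b).
  rewrite exprD e1 e2; ring.
have hPi := hP.
refine (idlD hPi _ (idlM hPi (srM hA hr1 hr2) hab)).
exact: (idlD hPi (idlMr hPi (srX hA m hx) hp1) (idlM hPi (srM hA hr1 ha) hp2)).
Qed.

Lemma krull L : ideal A L -> ~ L 1 -> exists M, maximal_ideal A M /\ L `<=` M.
Proof.
move=> hL h1.
have hn : forall n, ~ L (1 ^+ n) by move=> n; rewrite expr1n.
have [P [[hP [hLP hPn]] hmax]] := zorn_avoid hL (sr1 hA) hn.
have hP1 : ~ P 1 by move: (hPn 0%N); rewrite expr0.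
exists P; split=> //; split=> //; split.
  by move=> e; apply: hP1; rewrite e; exact: sr1.
move=> J hJ hPJ; case: (pselect (J 1)) => hJ1; first by right; exact: idl_one.
left; apply/seteqP; split=> //; apply: contrapT => hno.
apply: (hmax J); first by split.
split=> //; split; first by move=> y /hLP /hPJ.
by move=> n; rewrite expr1n.
Qed.

End SR2.
Section Loc.
Variable A : set K.
Hypothesis hA : subring A.

Lemma notin_ne0 I b : ideal A I -> ~ I b -> b != 0.
Proof. by move=> hI hb; apply/eqP => e; apply: hb; rewrite e; exact: (idl0 hI). Qed.

Variable Q : set K.
Hypothesis hQ : prime_ideal A Q.

Lemma loc_sub : A `<=` localization A Q.
Proof.
move=> a ha; exists a, 1; split=> //; split; first exact: (sr1 hA).
by split; [exact: (prime_not1 hQ) | rewrite divr1].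
Qed.

Lemma prime_mulN b d : A b -> A d -> ~ Q b -> ~ Q d -> ~ Q (b * d).
Proof. by move=> hb hd hb' hd' h; have [_ [_ hp]] := hQ; case: (hp _ _ hb hd h). Qed.

Lemma loc_subring : subring (localization A Q).
Proof.
have hQi : ideal A Q by case: hQ.
split; first exact: (loc_sub (sr0 hA)).
split; first exact: (loc_sub (sr1 hA)).
split.
  move=> x y [a [b [ha [hb [hb' ->]]]]] [c [d [hc [hd [hd' ->]]]]].
  exists (a * d - c * b), (b * d); split; first exact: (srB hA (srM hA ha hd) (srM hA hc hb)).
  split; first exact: (srM hA hb hd).
  split; first exact: prime_mulN.
  have nb := notin_ne0 hQi hb'; have nd := notin_ne0 hQi hd'.
  by field; rewrite nb nd.
move=> x y [a [b [ha [hb [hb' ->]]]]] [c [d [hc [hd [hd' ->]]]]].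
exists (a * c), (b * d); split; first exact: (srM hA ha hc).
split; first exact: (srM hA hb hd).
split; first exact: prime_mulN.
have nb := notin_ne0 hQi hb'; have nd := notin_ne0 hQi hd'.
by field; rewrite nb nd.
Qed.
End Loc.

Section DVR.
Variable R : set K.
Hypothesis hR : subring R.
Variable M : set K.
Hypothesis hM : maximal_ideal R M.
Variable v : K -> int.
Hypothesis vM : forall x y, x != 0 -> y != 0 -> v (x * y) = v x + v y.
Hypothesis vD : forall x y, x != 0 -> y != 0 -> x + y != 0 ->
        Order.min (v x) (v y) <= v (x + y).
Hypothesis vt : exists t, t != 0 /\ v t = 1.
Hypothesis vloc : forall x, localization R M x <-> (x = 0 \/ 0 <= v x).

Let hMi : ideal R M. Proof. by case: hM. Qed.
Let hMp : prime_ideal R M. Proof. exact: max_prime. Qed.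

Lemma v1 : v 1 = 0.
Proof. have := @vM 1 1 (oner_neq0 _) (oner_neq0 _); rewrite mulr1; lia. Qed.

Lemma vV x : x != 0 -> v x^-1 = - v x.
Proof.
move=> hx; have hx' : x^-1 != 0 by rewrite invr_eq0.
have := vM hx hx'; rewrite mulfV // v1; lia.
Qed.

Lemma vdiv x y : x != 0 -> y != 0 -> v (x / y) = v x - v y.
Proof. by move=> hx hy; rewrite vM ?invr_eq0 // vV. Qed.

Lemma vX x n : x != 0 -> v (x ^+ n) = v x *+ n.
Proof.
move=> hx; elim: n => [|n IH]; first by rewrite expr0 v1 mulr0n.
by rewrite exprS vM ?expf_neq0 // IH mulrS.
Qed.

Lemma v_ge0 x : R x -> x != 0 -> 0 <= v x.
Proof.
move=> hx hx0; have := proj1 (vloc x) (loc_sub hR hMp hx).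
by case=> // e; move: hx0; rewrite e eqxx.
Qed.

Lemma v_unit r : R r -> ~ M r -> v r = 0.
Proof.
move=> hr hMr; have r0 := notin_ne0 hMi hMr.
have h1 := v_ge0 hr r0.
have : localization R M r^-1.
  exists 1, r; split; first exact: (sr1 hR).
  by split=> //; split=> //; rewrite div1r.
move=> /vloc [e|]; first by move: r0; rewrite -invr_eq0 e eqxx.
rewrite vV //; lia.
Qed.

Lemma v_M p : M p -> p != 0 -> 1 <= v p.
Proof.
move=> hp p0; have hpR : R p := idl_sub hMi hp.
have h0 := v_ge0 hpR p0.
case: (pselect (v p = 0)) => e; last by lia.
exfalso.
have : localization R M p^-1.
  by apply/vloc; right; rewrite vV // e.
move=> [a [b [ha [hb [hb' eb]]]]].
have b0 := notin_ne0 hMi hb'.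
apply: hb'.
have -> : b = p * a.
  have : p * p^-1 = p * (a / b) by rewrite eb.
  rewrite mulfV // => h; apply: (@mulIf _ b^-1); first by rewrite invr_eq0.
  by rewrite -mulrA -h mulfV.
exact: (idlMr hMi ha hp).
Qed.

Lemma loc_of_v x : 0 <= v x -> exists a b, R a /\ R b /\ ~ M b /\ x = a / b.
Proof.
move=> hx; have : localization R M x by apply/vloc; right.
by move=> [a [b [ha [hb [hb' ->]]]]]; exists a, b.
Qed.

Lemma unif : exists t, M t /\ t != 0 /\ v t = 1.
Proof.
have [u [u0 vu]] := vt.
have hu0 : 0 <= v u by rewrite vu.
have [a [b [ha [hb [hb' eu]]]]] := loc_of_v hu0.
have b0 := notin_ne0 hMi hb'.
have ea : a = u * b by rewrite eu mulfVK.
have a0 : a != 0 by rewrite ea mulf_neq0.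
have va : v a = 1 by rewrite ea vM // vu v_unit.
exists a; split; last by split.
apply: contrapT => hMa; move: va; rewrite v_unit //.
Qed.

Definition vge (k : int) x := x = 0 \/ k <= v x.

Lemma vge_add k x y : vge k x -> vge k y -> vge k (x + y).
Proof.
case: (eqVneq x 0) => [->|x0]; first by rewrite add0r.
case: (eqVneq y 0) => [->|y0]; first by rewrite addr0.
case: (eqVneq (x + y) 0) => [->|s0]; first by left.
move=> [e|hx]; first by move: x0; rewrite e eqxx.
move=> [e|hy]; first by move: y0; rewrite e eqxx.
right; apply: le_trans (vD x0 y0 s0); by rewrite le_min hx hy.
Qed.

Lemma vge_mul k l x y : vge k x -> vge l y -> vge (k + l) (x * y).
Proof.
case: (eqVneq x 0) => [->|x0]; first by rewrite mul0r; left.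
case: (eqVneq y 0) => [->|y0]; first by rewrite mulr0; left.
move=> [e|hx]; first by move: x0; rewrite e eqxx.
move=> [e|hy]; first by move: y0; rewrite e eqxx.
by right; rewrite vM //; apply: lerD.
Qed.

Lemma vge_sum (T : eqType) k (s : seq T) (F : T -> K) :
  (forall z, z \in s -> vge k (F z)) -> vge k (\sum_(z <- s) F z).
Proof.
elim: s => [|z s IH] h; first by rewrite big_nil; left.
rewrite big_cons; apply: vge_add; first by apply: h; rewrite inE eqxx.
by apply: IH => w hw; apply: h; rewrite inE hw orbT.
Qed.

Lemma vge_loc x : localization R M x -> vge 0 x.
Proof. by move/vloc. Qed.

Lemma vge_M x : M x -> vge 1 x.
Proof. by move=> hx; case: (eqVneq x 0) => [->|x0]; [left|right; exact: v_M]. Qed.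

Lemma prime_in_max Q a : prime_ideal R Q -> Q `<=` M -> Q a -> a != 0 -> M `<=` Q.
Proof.
move=> hQ hQM ha a0 p hp.
have hQi : ideal R Q by case: hQ.
case: (eqVneq p 0) => [->|p0]; first exact: (idl0 hQi).
have haR : R a := idl_sub hQi ha.
have hpR : R p := idl_sub hMi hp.
have va := v_ge0 haR a0; have vp := v_M hp p0.
pose n := `|v a|%N.
have ean : v a = n%:Z by rewrite /n; lia.
have pn0 : p ^+ n != 0 by rewrite expf_neq0.
have hv : 0 <= v (p ^+ n / a).
  rewrite vdiv // vX // ean subr_ge0.
  have : (n%:Z <= (1 : int) *+ n) by rewrite -natz.
  move=> h; apply: le_trans h _; by rewrite ler_wMn2r //.
have [c [b [hc [hb [hb' e]]]]] := loc_of_v hv.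
have b0 := notin_ne0 hMi hb'.
have e2 : p ^+ n * b = a * c.
  have e1 : p ^+ n = c / b * a by rewrite -e mulfVK.
  rewrite e1; field; by rewrite b0.
have hQpb : Q (p ^+ n * b) by rewrite e2; exact: (idlMr hQi hc ha).
have [_ [_ hpr]] := hQ.
case: (hpr _ _ (srX hR n hpR) hb hQpb) => h.
  exact: (prime_X hR hQ hpR h).
by exfalso; apply: hb'; apply: hQM.
Qed.

End DVR.
Section Top.
Variable R : set K.
Hypothesis hR : subring R.

Definition pideal x := [set y | exists r, R r /\ y = r * x].
Definition Dset x := [set P | Spec R P /\ ~ (pideal x `<=` P)].
Definition Vset (xs : seq K) := [set Q | Spec R Q /\ forall x, x \in xs -> Q x].

Lemma pideal_ideal x : R x -> ideal R (pideal x).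
Proof.
move=> hx; split; first by move=> y [r [hr ->]]; exact: (srM hR hr hx).
split; first by exists 0; split; [exact: (sr0 hR)|rewrite mul0r].
split; first by move=> y z [r [hr ->]] [r' [hr' ->]]; exists (r + r'); split; [exact: (srD hR hr hr')|rewrite mulrDl].
by move=> a y ha [r [hr ->]]; exists (a * r); split; [exact: (srM hR ha hr)|rewrite mulrA].
Qed.

Lemma pideal_x x : R x -> pideal x x.
Proof. by move=> hx; exists 1; split; [exact: (sr1 hR)|rewrite mul1r]. Qed.

Lemma pideal_le x Q : ideal R Q -> Q x -> pideal x `<=` Q.
Proof. by move=> hQ hx y [r [hr ->]]; exact: (idlM hQ hr hx). Qed.

Lemma Dset_open x : R x -> zariski_open R (Dset x).
Proof. by move=> hx; exists (pideal x); split; [exact: pideal_ideal|]. Qed.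

Lemma Dset_compact x : R x -> zariski_compact R (Dset x).
Proof.
move=> hx C hC hcov.
pose L := [set y | R y /\ exists s : seq (set (set K)), (forall V, V \in s -> C V) /\
   forall Q, Spec R Q -> (forall V, V \in s -> ~ V Q) -> Q y].
have hL : ideal R L.
  split; first by move=> y [].
  split.
    split; first exact: (sr0 hR).
    by exists [::]; split=> // Q [hQ _] _; exact: (idl0 hQ).
  split.
    move=> y z [hy [s [hs hsQ]]] [hz [s' [hs' hsQ']]]; split; first exact: (srD hR hy hz).
    exists (s ++ s'); split.
      by move=> V; rewrite mem_cat => /orP[]; [apply: hs|apply: hs'].
    move=> Q hQ hn; have hQi : ideal R Q by case: hQ.
    apply: (idlD hQi).
      by apply: hsQ => // V hV; apply: hn; rewrite mem_cat hV.
    by apply: hsQ' => // V hV; apply: hn; rewrite mem_cat hV orbT.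
  move=> a y ha [hy [s [hs hsQ]]]; split; first exact: (srM hR ha hy).
  exists s; split=> // Q hQ hn; have hQi : ideal R Q by case: hQ.
  exact: (idlM hQi ha (hsQ Q hQ hn)).
case: (pselect (exists n, L (x ^+ n))) => [[n [_ [s [hs hsQ]]]]|hno].
  exists s; split=> // Q [hQ hnQ].
  apply: contrapT => hnot; apply: hnQ.
  apply: pideal_le; first by case: hQ.
  apply: (prime_X hR hQ hx); apply: hsQ => // V hV hVQ; apply: hnot; by exists V.
have hno' : forall n, ~ L (x ^+ n) by move=> n hn; apply: hno; exists n.
have [P [hP [hLP hPn]]] := prime_avoid hR hL hx hno'.
have hPD : Dset x P.
  split=> // hsub; apply: (hPn 1%N); rewrite expr1; apply: hsub; exact: pideal_x.
have [V hCV hVP] := hcov P hPD.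
have [I [hI eV]] := hC V hCV.
have : ~ (I `<=` P) by move: hVP; rewrite eV => -[].
move=> /existsNP [y /not_implyP [hIy hPy]].
exfalso; apply: hPy; apply: hLP; split; first exact: (idl_sub hI hIy).
exists [:: V]; split; first by move=> W; rewrite inE => /eqP ->.
move=> Q hQ hn; have : ~ V Q by apply: hn; rewrite inE eqxx.
rewrite eV => hnVQ; apply: contrapT => hQy; apply: hnVQ; split=> // hsub.
by apply: hQy; apply: hsub.
Qed.

Lemma Vset_nil : Vset [::] = Spec R.
Proof. by apply/seteqP; split=> Q; [case|move=> hQ; split]. Qed.

Lemma Vset_cons x xs : R x ->
  Vset (x :: xs) = [set P | Spec R P /\ ~ Dset x P] `&` Vset xs.
Proof.
move=> hx; apply/seteqP; split=> Q.
  move=> [hQ hall]; split; last by split=> // y hy; apply: hall; rewrite inE hy orbT.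
  split=> // -[_ hn]; apply: hn; apply: pideal_le; first by case: hQ.
  by apply: hall; rewrite inE eqxx.
move=> [[hQ hnD] [_ hall]]; split=> // y; rewrite inE => /orP[/eqP ->|hy]; last exact: hall.
apply: contrapT => hQx; apply: hnD; split=> // hsub; apply: hQx; apply: hsub; exact: pideal_x.
Qed.

Lemma Vset_open xs : (forall x, x \in xs -> R x) -> inverse_open R (Vset xs).
Proof.
move=> hxs tau [_ [htX [_ htI]]] hcomp.
elim: xs hxs => [|x xs IH] hxs; first by rewrite Vset_nil.
have hx : R x by apply: hxs; rewrite inE eqxx.
rewrite Vset_cons //; apply: htI.
  by apply: hcomp; [exact: Dset_open|exact: Dset_compact].
by apply: IH => y hy; apply: hxs; rewrite inE hy orbT.
Qed.

Lemma collect_xs (I : set K) (s : seq (set (set K))) :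
  (forall V, V \in s -> exists x, I x /\ V = Dset x) ->
  exists xs : seq K, (forall x, x \in xs -> I x) /\ forall V, V \in s -> exists2 x, x \in xs & V = Dset x.
Proof.
elim: s => [|V s IH] h; first by exists [::].
have [x [hIx eV]] := h V (mem_head _ _).
have [xs [hxs hs]] : exists xs : seq K, (forall x, x \in xs -> I x) /\ forall V, V \in s -> exists2 x, x \in xs & V = Dset x.
  by apply: IH => W hW; apply: h; rewrite inE hW orbT.
exists (x :: xs); split.
  by move=> y; rewrite inE => /orP[/eqP ->|]; [|apply: hxs].
move=> W; rewrite inE => /orP[/eqP ->|hW]; first by exists x; rewrite ?inE ?eqxx.
by have [y hy ->] := hs W hW; exists y; rewrite // inE hy orbT.
Qed.

Definition tauR := [set O : set (set K) | O `<=` Spec R /\ forall P, O P ->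
  exists xs : seq K, (forall x, x \in xs -> R x /\ P x) /\ Vset xs `<=` O].

Lemma tauR_top : is_topology_on (Spec R) tauR.
Proof.
split; first by move=> O [].
split.
  split=> // P hP; exists [::]; split=> // Q []//.
split.
  move=> F hF; split; first by move=> P [O hO hOP]; have [+ _] := hF O hO; apply.
  move=> P [O hO hOP]; have [_ h] := hF O hO; have [xs [hxs hsub]] := h P hOP.
  by exists xs; split=> // Q hQ; exists O => //; apply: hsub.
move=> O1 O2 [h1 h1'] [h2 h2']; split; first by move=> P [/h1].
move=> P [hP1 hP2]; have [xs1 [hx1 hs1]] := h1' P hP1; have [xs2 [hx2 hs2]] := h2' P hP2.
exists (xs1 ++ xs2); split.
  by move=> x; rewrite mem_cat => /orP[]; [apply: hx1|apply: hx2].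
move=> Q [hQ hall]; split.
  by apply: hs1; split=> // x hx; apply: hall; rewrite mem_cat hx.
by apply: hs2; split=> // x hx; apply: hall; rewrite mem_cat hx orbT.
Qed.

Lemma tauR_comp U : zariski_open R U -> zariski_compact R U ->
  tauR [set P | Spec R P /\ ~ U P].
Proof.
move=> [I [hI eU]] hUc; split; first by move=> P [].
move=> P [hP hUP].
have hIP : I `<=` P.
  move=> y hy; apply: contrapT => hPy; apply: hUP; rewrite eU; split=> // hsub.
  by apply: hPy; apply: hsub.
pose C := [set V | exists x, I x /\ V = Dset x].
have hC : forall V, C V -> zariski_open R V.
  by move=> V [x [hx ->]]; apply: Dset_open; exact: (idl_sub hI hx).
have hcov : U `<=` \bigcup_(V in C) V.
  move=> Q; rewrite eU => -[hQ hnI].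
  move: hnI => /existsNP [y /not_implyP [hIy hQy]].
  exists (Dset y); first by exists y.
  split=> // hsub; apply: hQy; apply: hsub; apply: pideal_x; exact: (idl_sub hI hIy).
have [s [hs hsU]] := hUc C hC hcov.
have [xs [hxs hxsV]] := collect_xs hs.
exists xs; split; first by move=> x hx; split; [exact: (idl_sub hI (hxs x hx))|apply: hIP; apply: hxs].
move=> Q [hQ hall]; split=> // hUQ.
have [V [hV hVQ]] := hsU Q hUQ.
have [x hx eV] := hxsV V hV.
move: hVQ; rewrite eV => -[_ hn]; apply: hn; apply: pideal_le; first by case: hQ.
exact: hall.
Qed.

Lemma inv_open_char O P : inverse_open R O -> O P ->
  exists xs : seq K, (forall x, x \in xs -> R x /\ P x) /\ Vset xs `<=` O.
Proof.
move=> hO hOP; have [_ h] := hO tauR tauR_top tauR_comp.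
exact: h.
Qed.

Lemma maxopen_char O P : maxspace_open R O -> O P ->
  exists xs : seq K, (forall x, x \in xs -> R x /\ P x) /\
    forall Q, maximal_ideal R Q -> (forall x, x \in xs -> Q x) -> O Q.
Proof.
move=> [O0 [hO0 ->]] [hO0P hMP].
have [xs [hxs hsub]] := inv_open_char hO0 hO0P.
exists xs; split=> // Q hQ hall; split=> //; apply: hsub; split=> //.
exact: (max_prime hR hQ).
Qed.

Lemma maxopen_V (xs : seq K) : (forall x, x \in xs -> R x) ->
  maxspace_open R [set Q | maximal_ideal R Q /\ forall x, x \in xs -> Q x].
Proof.
move=> hxs; exists (Vset xs); split; first exact: Vset_open.
apply/seteqP; split=> Q.
  by move=> [hQ hall]; split=> //; split=> //; exact: (max_prime hR hQ).
by move=> [[_ hall] hQ]; split.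
Qed.

End Top.
Section IdGen.
Variable A : set K.
Hypothesis hA : subring A.

Lemma big_ord_in (P : K -> Prop) n (F : 'I_n -> K) : P 0 -> (forall x y, P x -> P y -> P (x + y)) ->
  (forall i, P (F i)) -> P (\sum_(i < n) F i).
Proof. by move=> h0 hD hF; apply: big_ind. Qed.

Lemma mem_mkseq_ex (f : nat -> K) n a : a \in mkseq f n -> exists2 i, (i < n)%N & a = f i.
Proof. by rewrite /mkseq => /mapP [i]; rewrite mem_iota add0n => /andP[_ hi] ->; exists i. Qed.

Lemma idg_ideal (s : seq K) : (forall x, x \in s -> A x) -> ideal A (ideal_gen A s).
Proof.
move=> hs; split.
  move=> x [r [hsz [hr ->]]]; apply: big_ord_in; [exact: (sr0 hA)|exact: (srD hA)|].
  move=> i; apply: (srM hA); first by apply: hr; apply: mem_nth; rewrite hsz.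
  by apply: hs; apply: mem_nth.
split.
  exists (nseq (size s) 0); split; first by rewrite size_nseq.
  split; first by move=> a /nseqP [-> _]; exact: (sr0 hA).
  by rewrite big1 // => i _; rewrite nth_nseq; case: ifP; rewrite mul0r.
split.
  move=> x y [r1 [hs1 [hr1 ->]]] [r2 [hs2 [hr2 ->]]].
  exists (mkseq (fun i => r1`_i + r2`_i) (size s)); split; first by rewrite size_mkseq.
  split.
    move=> a /mem_mkseq_ex [i hi ->]; apply: (srD hA).
      by apply: hr1; apply: mem_nth; rewrite hs1.
    by apply: hr2; apply: mem_nth; rewrite hs2.
  rewrite -big_split /=; apply: eq_bigr => i _; rewrite nth_mkseq //; ring.
move=> a x ha [r [hsz [hr ->]]].
exists (map (fun z => a * z) r); split; first by rewrite size_map.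
split; first by move=> b /mapP [z hz ->]; apply: (srM hA ha); apply: hr.
rewrite mulr_sumr; apply: eq_bigr => i _; rewrite (nth_map 0); last by rewrite hsz.
by rewrite mulrA.
Qed.

Lemma idg_mem (s : seq K) x : x \in s -> ideal_gen A s x.
Proof.
move=> hx; have hk : (index x s < size s)%N by rewrite index_mem.
exists (mkseq (fun i => if i == index x s then 1 else 0) (size s)); split; first by rewrite size_mkseq.
split; first by move=> a /mem_mkseq_ex [i _ ->]; case: ifP => _; [exact: (sr1 hA)|exact: (sr0 hA)].
rewrite (bigD1 (Ordinal hk)) //= big1; first by rewrite nth_mkseq // eqxx mul1r addr0 nth_index.
move=> i hi; rewrite nth_mkseq //; case: ifP; last by rewrite mul0r.
by move=> /eqP e; exfalso; move: hi; apply/negP; rewrite negbK; apply/eqP; apply: val_inj.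
Qed.

Lemma idg_le (s : seq K) N : ideal A N -> (forall x, x \in s -> N x) -> ideal_gen A s `<=` N.
Proof.
move=> hN hs x [r [hsz [hr ->]]]; apply: big_ord_in; [exact: (idl0 hN)|exact: (idlD hN)|].
move=> i; apply: (idlM hN); first by apply: hr; apply: mem_nth; rewrite hsz.
by apply: hs; apply: mem_nth.
Qed.

End IdGen.
End Alg.

Section Tower.
Variables (T : Type) (X : set T) (d : set T -> set T).
Hypothesis dsub : forall A, d A `<=` A.

Definition tclosed (F : set (set T)) :=
  (forall S : set (set T), S `<=` F -> F (X `&` \bigcap_(A in S) A)) /\
  (forall A, F A -> F (d A)).
Definition tower (A : set T) := forall F, tclosed F -> F A.

Lemma tower_closed : tclosed tower.
Proof.
split; first by move=> S hS F hF; apply: hF.1 => A /hS; apply.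
by move=> A hA F hF; apply: hF.2; apply: hA.
Qed.

Lemma tower_ind (Pp : set T -> Prop) :
  (forall S, S `<=` tower -> S `<=` Pp -> Pp (X `&` \bigcap_(A in S) A)) ->
  (forall A, tower A -> Pp A -> Pp (d A)) ->
  forall A, tower A -> Pp A.
Proof.
move=> h1 h2 A hA.
have : tclosed (tower `&` Pp).
  split.
    move=> S hS; split; first by apply: tower_closed.1 => B /hS [].
    by apply: h1 => B /hS [].
  by move=> B [hB hPB]; split; [apply: tower_closed.2|apply: h2].
by move=> /hA [].
Qed.

Lemma tower_subX A : tower A -> A `<=` X.
Proof.
move: A; apply: (@tower_ind (fun A => A `<=` X)) => [S _ _|B _ hB]; first by move=> x [].
by move=> x /dsub /hB.
Qed.

Definition extreme A := forall C, tower C -> A `<` C -> A `<=` d C.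

Lemma extreme_cmp A : tower A -> extreme A -> forall C, tower C -> C `<=` d A \/ A `<=` C.
Proof.
move=> hA hext; apply: tower_ind.
  move=> S hS hP; case: (pselect (exists s, S s /\ s `<=` d A)) => [[s [hs hsd]]|hno].
    by left; move=> x [_ hx]; apply: hsd; apply: hx.
  right=> x hx; split; first exact: (tower_subX hA hx).
  move=> s hs; case: (hP s hs) => h; last exact: h.
  by exfalso; apply: hno; exists s.
move=> C hC [hCd|hAC]; first by left; move=> x /dsub /hCd.
case: (pselect (C `<=` A)) => hCA.
  have e : C = A by apply/seteqP; split.
  by left; rewrite e.
by right; apply: hext.
Qed.

Lemma all_extreme A : tower A -> extreme A.
Proof.
move: A; apply: (@tower_ind extreme).
  move=> S hS hE C hC [hGC hnCG].
  have [s [hs hCs]] : exists s, S s /\ ~ C `<=` s.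
    apply: contrapT => hno; apply: hnCG => x hx; split; first exact: (tower_subX hC hx).
    move=> s hs; apply: contrapT => hsx; apply: hno; exists s; split=> //.
    by move=> hsub; apply: hsx; apply: hsub.
  case: (extreme_cmp (hS s hs) (hE s hs) hC) => h.
    by exfalso; apply: hCs => x /h /dsub.
  by move=> x [_ hx]; apply: (hE s hs C hC) => //; apply: hx.
move=> A hA hext C hC [hdAC hnC].
case: (extreme_cmp hA hext hC) => h; first by exfalso; apply: hnC.
case: (pselect (C `<=` A)) => hCA.
  have e : C = A by apply/seteqP; split.
  by rewrite e.
by move=> x /dsub hx; apply: (hext C hC) => //; split.
Qed.

Lemma tower_cmp A C : tower A -> tower C -> C `<=` d A \/ A `<=` C.
Proof. by move=> hA hC; apply: extreme_cmp => //; apply: all_extreme. Qed.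

Lemma tower_total A C : tower A -> tower C -> A `<=` C \/ C `<=` A.
Proof.
move=> hA hC; case: (tower_cmp hA hC) => h; last by left.
by right=> x /h /dsub.
Qed.

Lemma tower_fix A : tower A -> d A = A -> forall C, tower C -> A `<=` C.
Proof.
move=> hA hfix; apply: tower_ind.
  by move=> S _ hS x hx; split; [exact: (tower_subX hA hx)|move=> s hs; apply: hS].
move=> C hC hAC; case: (tower_cmp hC hA) => h; first by [].
have e : C = A by apply/seteqP; split.
by rewrite e hfix.
Qed.

Lemma tower_max (S : set (set T)) : S `<=` tower -> (exists s, S s) ->
  exists m, S m /\ forall s, S s -> s `<=` m.
Proof.
move=> hS [s0 hs0].
pose U := X `&` \bigcap_(A in [set A | tower A /\ forall s, S s -> s `<=` A]) A.
have hU : tower U by apply: tower_closed.1 => A [].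
have hsU : forall s, S s -> s `<=` U.
  move=> s hs x hx; split; first exact: (tower_subX (hS s hs) hx).
  by move=> A [_ hA]; apply: hA hs _ hx.
case: (pselect (S U)) => hSU; first by exists U.
exfalso.
have hsd : forall s, S s -> s `<=` d U.
  move=> s hs; case: (tower_cmp hU (hS s hs)) => // hUs.
  have e : s = U by apply/seteqP; split; [apply: hsU|].
  by exfalso; apply: hSU; rewrite -e.
have hdU : tower (d U) by apply: tower_closed.2.
have hUd : U `<=` d U by move=> x [_ hx]; apply: hx; split.
have efix : d U = U by apply/seteqP; split.
apply: hSU.
have e : U = s0.
  apply/seteqP; split; first exact: (tower_fix hU efix (hS s0 hs0)).
  exact: hsU.
by rewrite e.
Qed.

Definition tI := {A : set T | tower A}.
Definition tlt (a b : tI) := proj1_sig b `<` proj1_sig a.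

Lemma tlt_wf : well_founded tlt.
Proof.
move=> a; apply: contrapT => hna.
pose S := [set A | exists p : tower A, ~ Acc tlt (exist _ A p)].
have [m [[pm hm] hmax]] : exists m, S m /\ forall s, S s -> s `<=` m.
  apply: tower_max; first by move=> A [p _].
  by exists (proj1_sig a); case: a hna => A p hna; exists p.
apply: hm; constructor => b hb.
apply: contrapT => hnb.
have : S (proj1_sig b) by case: b hb hnb => B pB hb hnb; exists pB.
move=> /hmax hbm; case: hb => _ /=; apply.
exact: hbm.
Qed.

Lemma tlt_trans (a b c : tI) : tlt a b -> tlt b c -> tlt a c.
Proof.
rewrite /tlt => -[h1 h1'] [h2 h2']; split; first by move=> x /h2 /h1.
by move=> h; apply: h1' => x /h /h2.
Qed.

Lemma tI_eq (a b : tI) : proj1_sig a = proj1_sig b -> a = b.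
Proof. by case: a => A pA; case: b => B pB /= e; apply: eq_exist. Qed.

Lemma tlt_total (a b : tI) : tlt a b \/ a = b \/ tlt b a.
Proof.
case: a => A pA; case: b => B pB; rewrite /tlt /=.
case: (tower_total pA pB) => h.
  case: (pselect (B `<=` A)) => h'; first by right; left; apply: tI_eq; apply/seteqP; split.
  by right; right; split.
case: (pselect (A `<=` B)) => h'; first by right; left; apply: tI_eq; apply/seteqP; split.
by left; split.
Qed.

Lemma tower_scattered :
  (forall F, tower F -> d F = F -> F = set0) ->
  exists (I : Type) (lt : I -> I -> Prop) (D : I -> set T) (i : I),
    is_wellorder lt /\
    (forall i, (forall j, is_pred_of lt j i -> D i = d (D j)) /\
       (~ (exists j, is_pred_of lt j i) -> D i = [set x | X x /\ forall j, lt j i -> D j x])) /\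
    D i = set0.
Proof.
move=> hfix.
pose F := X `&` \bigcap_(A in tower) A.
have hF : tower F by apply: tower_closed.1.
have hdF : tower (d F) by apply: tower_closed.2.
have eF : d F = F.
  apply/seteqP; split; first exact: dsub.
  by move=> x [_ hx]; apply: hx.
exists tI, tlt, (@proj1_sig _ _), (exist _ F hF).
split; first by split; [exact: tlt_wf|split; [exact: tlt_trans|exact: tlt_total]].
split; last exact: hfix.
case=> B pB; split.
  case=> A pA [hlt hno]; rewrite /tlt /= in hlt *.
  have hBd : B `<=` d A.
    case: (tower_cmp pA pB) => // hAB; by exfalso; case: hlt => _; apply; apply: hAB.
  apply/seteqP; split=> //; apply: contrapT => hdB.
  have hdA : tower (d A) by apply: tower_closed.2.
  case: (pselect (d A = A)) => efA.
    by case: hlt => _ []; apply: tower_fix.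
  apply: hno; exists (exist _ (d A) hdA); rewrite /tlt /=; split.
    split; first exact: dsub.
    by move=> hAd; apply: efA; apply/seteqP; split.
  by split.
move=> hnp.
pose G := X `&` \bigcap_(A in [set A | tower A /\ B `<` A]) A.
have hG : tower G by apply: tower_closed.1 => A [].
have hBG : B `<=` G.
  move=> x hx; split; first exact: (tower_subX pB hx).
  by move=> A [_ [hBA _]]; apply: hBA.
apply/seteqP; split.
  move=> x hx; split; first exact: (tower_subX pB hx).
  by case=> A pA; rewrite /tlt /= => -[hBA _]; apply: hBA.
have -> : [set x | X x /\ (forall j : tI, tlt j (exist _ B pB) -> proj1_sig j x)] = G.
  apply/seteqP; split.
    move=> x [hx hall]; split=> // A [pA hBA]; exact: (hall (exist _ A pA) hBA).
  by move=> x [hx hall]; split=> //; case=> A pA /= hBA; apply: hall; split.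
apply: contrapT => hGB; apply: hnp; exists (exist _ G hG); split.
  by rewrite /tlt /=; exact: (conj hBG hGB).
move=> [[C pC] [hCG hBC]]; rewrite /tlt /= in hCG hBC.
by case: hCG => _; apply=> x [_ hx]; apply: hx; split.
Qed.

End Tower.

Section AD.
Variable K : fieldType.
Variable R : set K.
Hypothesis hR : subring R.
Hypothesis hAD : almost_dedekind R.

Lemma max_nonzero P : maximal_ideal R P -> exists a, P a /\ a != 0.
Proof.
move=> hP; have [v [vM [vD [vt vloc]]]] := hAD hP.
have [t [ht [t0 _]]] := unif hR hP vM vt vloc.
by exists t.
Qed.

Lemma max_sep P Q : maximal_ideal R P -> maximal_ideal R Q -> P <> Q ->
  exists m, P m /\ ~ Q m.
Proof.
move=> hP hQ hne; apply: contrapT => hno.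
have hPQ : P `<=` Q.
  by move=> m hm; apply: contrapT => hQm; apply: hno; exists m.
have [_ [hneP hmaxP]] := hP; have [hQi [hneQ _]] := hQ.
by case: (hmaxP Q hQi hPQ) => e; [apply: hne; rewrite e|apply: hneQ].
Qed.

Lemma dim1 L a : prime_ideal R L -> L a -> a != 0 -> maximal_ideal R L.
Proof.
move=> hL ha a0; have hLi : ideal R L by case: hL.
have [M [hM hLM]] := krull hR hLi (prime_not1 hL).
have [v [vM [vD [vt vloc]]]] := hAD hM.
have hML := prime_in_max hR hM vM vloc hL hLM ha a0.
suff -> : L = M by [].
by apply/seteqP; split.
Qed.

Lemma finite_in_chain (F : set (set K)) (ys : seq K) :
  total_on F subset -> (exists X, F X) -> (forall y, y \in ys -> (\bigcup_(X in F) X) y) ->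
  exists X, F X /\ forall y, y \in ys -> X y.
Proof.
move=> htot hne; elim: ys => [|y ys IH] h; first by case: hne => X hX; exists X.
have [Y hY hyY] := h y (mem_head _ _).
have [X [hX hXs]] : exists X, F X /\ forall y, y \in ys -> X y.
  by apply: IH => z hz; apply: h; rewrite inE hz orbT.
case: (htot X Y hX hY) => hXY.
  exists Y; split=> // z; rewrite inE => /orP[/eqP ->//|hz]; exact: (hXY _ (hXs z hz)).
exists X; split=> // z; rewrite inE => /orP[/eqP ->|hz]; [exact: (hXY _ hyY)|exact: hXs].
Qed.

Lemma collect_addelt L x (ys : seq K) :
  (forall y, y \in ys -> addelt R L x y) ->
  exists ls : seq K, (forall l, l \in ls -> L l) /\
    forall Q, ideal R Q -> (forall l, l \in ls -> Q l) -> Q x -> forall y, y \in ys -> Q y.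
Proof.
elim: ys => [|y ys IH] h; first by exists [::].
have [m [r [hm [hr ey]]]] := h y (mem_head _ _).
have [ls [hls hQ]] : exists ls : seq K, (forall l, l \in ls -> L l) /\
    forall Q, ideal R Q -> (forall l, l \in ls -> Q l) -> Q x -> forall y, y \in ys -> Q y.
  by apply: IH => z hz; apply: h; rewrite inE hz orbT.
exists (m :: ls); split.
  by move=> l; rewrite inE => /orP[/eqP ->|]; [|apply: hls].
move=> Q hQi hall hx z; rewrite inE => /orP[/eqP ->|hz].
  rewrite ey; apply: (idlD hQi); first by apply: hall; rewrite inE eqxx.
  exact: (idlM hQi hr hx).
by apply: (hQ Q hQi) => // l hl; apply: hall; rewrite inE hl orbT.
Qed.

Definition isopenR := maxspace_open R.
Definition ddR (A : set (set K)) := [set x | A x /\ forall O, isopenR O -> O x ->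
  exists y, A y /\ O y /\ y <> x].

Definition closedR (D : set (set K)) := forall x, Max R x -> ~ D x ->
  exists O, isopenR O /\ O x /\ forall y, O y -> ~ D y.

Lemma ddR_sub A : ddR A `<=` A. Proof. by move=> x []. Qed.

Lemma tower_closedR A : tower (Max R) ddR A -> closedR A.
Proof.
move: A; apply: (@tower_ind _ (Max R) ddR closedR).
  move=> S _ hS x hx hnG.
  have [s [hs hsx]] : exists s, S s /\ ~ s x.
    apply: contrapT => hno; apply: hnG; split=> // s hs; apply: contrapT => hsx.
    by apply: hno; exists s.
  have [O [hO [hOx hOs]]] := hS s hs x hx hsx.
  by exists O; split=> //; split=> // y hy [_ hG]; apply: (hOs y hy); apply: hG.
move=> C _ hC x hx hnd.
case: (pselect (C x)) => hCx; last first.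
  have [O [hO [hOx hOs]]] := hC x hx hCx.
  by exists O; split=> //; split=> // y hy [hCy _]; apply: (hOs y hy).
have [O [hO [hOx hOy]]] : exists O, isopenR O /\ O x /\ forall y, C y -> O y -> y = x.
  apply: contrapT => hno; apply: hnd; split=> // O hO hOx.
  apply: contrapT => hno2; apply: hno; exists O; split=> //; split=> // y hCy hOy.
  apply: contrapT => hyx; apply: hno2; by exists y.
exists O; split=> //; split=> // y hy hdy.
have e := hOy y (ddR_sub hdy) hy; apply: hnd; by rewrite -e.
Qed.


Section Perfect.
Variable f : set K -> nat.
Hypothesis hf : forall x y, Max R x -> Max R y -> f x = f y -> x = y.
Variable F : set (set K).
Hypothesis hFM : F `<=` Max R.
Hypothesis hFc : closedR F.
Hypothesis hFd : F `<=` ddR F.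

Let W (xs : seq K) := [set Q | F Q /\ forall x, x \in xs -> Q x].

Let step_ex k (xs : seq K) : exists m, (forall x, x \in xs -> R x) -> (exists Q, W xs Q) ->
  R m /\ (exists Q, W (m :: xs) Q) /\ forall Q, Max R Q -> f Q = k -> ~ W (m :: xs) Q.
Proof.
case: (pselect ((forall x, x \in xs -> R x) /\ exists Q, W xs Q)); last first.
  by move=> hno; exists 0 => h1 h2; exfalso; apply: hno.
move=> [hxs [P [hFP hPxs]]].
have hPM := hFM hFP.
have Wcons m Q : F Q -> (forall x, x \in xs -> Q x) -> Q m -> W (m :: xs) Q.
  move=> hQ hQx hQm; split=> // y; rewrite inE => /orP[/eqP ->//|]; exact: hQx.
case: (pselect (exists Qk, Max R Qk /\ f Qk = k)) => [[Qk [hQk fQk]]|hno]; last first.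
  exists 0 => _ _; split; first exact: (sr0 hR).
  split; first by exists P; apply: Wcons => //; case: hPM => hPi _; exact: (idl0 hPi).
  by move=> Q hQ fQ; exfalso; apply: hno; exists Q.
case: (pselect (P = Qk)) => ePQ.
  have hO := maxopen_V hR hxs.
  have [y [hFy [[hyM hyx] hyP]]] := (hFd hFP).2 _ hO (conj hPM hPxs).
  have [m [hym hPm]] := max_sep hyM hPM hyP.
  exists m => _ _; split; first by case: hyM => hyi _; exact: (idl_sub hyi hym).
  split; first by exists y; apply: Wcons.
  move=> Q hQ fQ [_ hQm]; have eQ : Q = P by rewrite ePQ; apply: hf => //; rewrite fQ fQk.
  by apply: hPm; rewrite -eQ; apply: hQm; rewrite inE eqxx.
have [m [hPm hQkm]] := max_sep hPM hQk ePQ.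
exists m => _ _; split; first by case: hPM => hPi _; exact: (idl_sub hPi hPm).
split; first by exists P; apply: Wcons.
move=> Q hQ fQ [_ hQm]; have eQ : Q = Qk by apply: hf => //; rewrite fQ fQk.
by apply: hQkm; rewrite -eQ; apply: hQm; rewrite inE eqxx.
Qed.

Lemma perfect_empty : F = set0.
Proof.
apply/seteqP; split=> // P0 hP0; exfalso.
have [a0 [ha0 a00]] := max_nonzero (hFM hP0).
pose g k xs := proj1_sig (cid (step_ex k xs)).
have hg k xs := proj2_sig (cid (step_ex k xs)).
pose xsf := fix xsf n := match n with 0%N => [:: a0] | k.+1 => g k (xsf k) :: xsf k end.
have inv : forall n, (forall x, x \in xsf n -> R x) /\ exists Q, W (xsf n) Q.
  elim=> [|n [h1 h2]].
    split; first by move=> x; rewrite inE => /eqP ->; case: (hFM hP0) => hi _; exact: (idl_sub hi ha0).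
    by exists P0; split=> // x; rewrite inE => /eqP ->.
  have [hm [hW _]] := hg n (xsf n) h1 h2.
  split=> //; move=> x /=; rewrite inE => /orP[/eqP ->//|]; exact: h1.
have excl : forall k Q, Max R Q -> f Q = k -> ~ W (xsf k.+1) Q.
  by move=> k Q hQ fQ; have [h1 h2] := inv k; have [_ [_ h]] := hg k (xsf k) h1 h2; apply: h.
have mono : forall n m, (n <= m)%N -> forall x, x \in xsf n -> x \in xsf m.
  move=> n m; elim: m => [|m IH] hnm x hx.
    by move: hnm; rewrite leqn0 => /eqP e; move: hx; rewrite e.
  move: hnm; rewrite leq_eqVlt => /orP[/eqP e|hlt]; first by move: hx; rewrite e.
  by rewrite /= inE (IH hlt x hx) orbT.
have Wmono : forall n m Q, (n <= m)%N -> W (xsf m) Q -> W (xsf n) Q.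
  by move=> n m Q hnm [hQ hall]; split=> // x hx; apply: hall; apply: mono hnm _ _.
pose Phi (L : set K) := ideal R L /\ forall ys : seq K, (forall y, y \in ys -> L y) ->
   forall k, exists Q, W (xsf k) Q /\ forall y, y \in ys -> Q y.
have Phi0 : Phi [set 0].
  split.
    split; first by move=> x ->; exact: (sr0 hR).
    split=> //; split; first by move=> x y -> ->; rewrite addr0.
    by move=> a x _ ->; rewrite mulr0.
  move=> ys hys k; have [_ [Q hQ]] := inv k; exists Q; split=> // y /hys ->.
  by case: (hFM hQ.1) => hi _; exact: (idl0 hi).
have [Lm [[hLm hLc] hmax]] := zorn_helper Phi0 (ex_intro _ 0 erefl)
  (fun Fs hFs htot hne => conj (chain_ideal (fun X hX => (hFs X hX).1) htot hne)
    (fun ys hys k => match finite_in_chain htot hne hys with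
      ex_intro X (conj hX hXy) => (hFs X hX).2 ys hXy k end)).
have addP : forall c, R c ->
    (forall ys : seq K, (forall y, y \in ys -> addelt R Lm c y) ->
       forall k, exists Q, W (xsf k) Q /\ forall y, y \in ys -> Q y) -> Lm c.
  move=> c hc hcons; apply: contrapT => hnc.
  apply: (hmax (addelt R Lm c)).
    split; first exact: (addelt_sub hR hLm hc).
    by move=> hsub; apply: hnc; apply: hsub; exact: (addelt_x hR hLm hc).
  by split; [exact: (addelt_ideal hR hLm hc)|exact: hcons].
have hxsL : forall k x, x \in xsf k -> Lm x.
  move=> k x hx; apply: addP; first exact: (inv k).1.
  move=> ys hys k'; have [ls [hls hQ]] := collect_addelt hys.
  have [Q [hWQ hQls]] := hLc ls hls (maxn k k').
  exists Q; split; first by apply: Wmono hWQ; rewrite leq_maxr.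
  apply: hQ => //; first by case: (hFM hWQ.1).1.
  by apply: hWQ.2; apply: mono hx; rewrite leq_maxl.
have hLmp : prime_ideal R Lm.
  split=> //; split.
    move=> e; have h1 : forall y, y \in [:: 1] -> Lm y.
      by move=> y; rewrite inE => /eqP ->; rewrite e; exact: (sr1 hR).
    have [Q [hWQ hQ1]] := hLc [:: 1] h1 0%N.
    by apply: (max_not1 (hFM hWQ.1)); apply: hQ1; rewrite inE eqxx.
  move=> a b ha hb hab; apply: contrapT => /not_orP [hna hnb].
  have bad : forall c, R c -> ~ Lm c -> exists ys : seq K, (forall y, y \in ys -> addelt R Lm c y) /\
      exists k, forall Q, W (xsf k) Q -> ~ (forall y, y \in ys -> Q y).
    move=> c hc hnc; apply: contrapT => hno; apply: hnc; apply: addP => // ys hys k.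
    apply: contrapT => hnoQ; apply: hno; exists ys; split=> //; exists k => Q hWQ hQys.
    by apply: hnoQ; exists Q.
  have [ysa [hysa [ka hka]]] := bad a ha hna.
  have [ysb [hysb [kb hkb]]] := bad b hb hnb.
  have [lsa [hlsa hQa]] := collect_addelt hysa.
  have [lsb [hlsb hQb]] := collect_addelt hysb.
  have hlab : forall y, y \in (a * b :: lsa ++ lsb) -> Lm y.
    by move=> y; rewrite inE mem_cat => /orP[/eqP ->//|/orP[/hlsa|/hlsb]].
  have [Q [hWQ hQall]] := hLc (a * b :: lsa ++ lsb) hlab (maxn ka kb).
  have hQmax := hFM hWQ.1; have [hQi _] := hQmax.
  have [_ [_ hQpr]] := max_prime hR hQmax.
  case: (hQpr a b ha hb (hQall _ (mem_head _ _))) => hQab.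
    apply: (hka Q); first by apply: Wmono hWQ; rewrite leq_maxl.
    apply: hQa => // l hl; apply: hQall; by rewrite inE mem_cat hl orbT.
  apply: (hkb Q); first by apply: Wmono hWQ; rewrite leq_maxr.
  apply: hQb => // l hl; apply: hQall; by rewrite inE mem_cat hl !orbT.
have hLmM : maximal_ideal R Lm.
  by apply: (dim1 hLmp (hxsL 0%N a0 (mem_head _ _))).
have hFL : F Lm.
  apply: contrapT => hnF.
  have [O [hO [hOL hOF]]] := hFc hLmM hnF.
  have [xs [hxs hxsO]] := maxopen_char hR hO hOL.
  have [Q [hWQ hQxs]] := hLc xs (fun y hy => (hxs y hy).2) 0%N.
  have hOQ : O Q by apply: hxsO; [exact: (hFM hWQ.1)|exact: hQxs].
  exact: (hOF Q hOQ hWQ.1).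
apply: (excl (f Lm) Lm hLmM erefl); split=> // x hx; exact: (hxsL _ x hx).
Qed.

End Perfect.

Lemma partA : countable_set (Max R) -> scattered (Max R) (maxspace_open R).
Proof.
move=> [f hf].
have hfix : forall F, tower (Max R) ddR F -> ddR F = F -> F = set0.
  move=> F hF eF; apply: (perfect_empty hf).
  - exact: (tower_subX ddR_sub hF).
  - exact: (tower_closedR hF).
  - by rewrite eF.
have [I [lt [D [i [hwo [hds hDi]]]]]] := tower_scattered ddR_sub hfix.
exists I, lt, D, i; split=> //; split=> //.
Qed.


Lemma min_elt (v : K -> int) (s : seq K) : (exists y, y \in s /\ y != 0) ->
  exists g, g \in s /\ g != 0 /\ forall y, y \in s -> y = 0 \/ v g <= v y.
Proof.
elim: s => [|y s IH] hex; first by case: hex => y [].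
case: (pselect (exists z, z \in s /\ z != 0)) => hs.
  have [g [hg [g0 hmin]]] := IH hs.
  case: (eqVneq y 0) => [y0|y0].
    exists g; split; first by rewrite inE hg orbT.
    split=> // z; rewrite inE => /orP[/eqP ->|hz]; [by left|exact: hmin].
  case: (lerP (v y) (v g)) => hyg.
    exists y; split; first exact: mem_head.
    split=> // z; rewrite inE => /orP[/eqP ->|hz]; first by right.
    case: (hmin z hz) => [->|h]; [by left|right; exact: le_trans h].
  exists g; split; first by rewrite inE hg orbT.
  split=> // z; rewrite inE => /orP[/eqP ->|hz]; [right; exact: ltW|exact: hmin].
have y0 : y != 0.
  case: hex => z [hz z0]; move: hz; rewrite inE => /orP[/eqP <-//|hz].
  by exfalso; apply: hs; exists z.
exists y; split; first exact: mem_head.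
split=> // z; rewrite inE => /orP[/eqP ->|hz]; first by right.
left; apply: contrapT => /eqP z0; apply: hs; by exists z.
Qed.

Lemma common_denom (A Q : set K) (ys : seq K) : subring A -> prime_ideal A Q ->
  (forall y, y \in ys -> localization A Q y) ->
  exists d, A d /\ ~ Q d /\ forall y, y \in ys -> A (d * y).
Proof.
move=> hA hQ; elim: ys => [|y ys IH] h.
  by exists 1; split; [exact: (sr1 hA)|split=> //; exact: (prime_not1 hQ)].
have [d [hd [hQd hdy]]] : exists d, A d /\ ~ Q d /\ forall y, y \in ys -> A (d * y).
  by apply: IH => z hz; apply: h; rewrite inE hz orbT.
have [a [b [ha [hb [hQb ey]]]]] := h y (mem_head _ _).
have hQi : ideal A Q by case: hQ.
have b0 := notin_ne0 hQi hQb.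
exists (d * b); split; first exact: (srM hA hd hb).
split; first exact: (prime_mulN hQ hd hb hQd hQb).
move=> z; rewrite inE => /orP[/eqP ->|hz].
  rewrite ey; have -> : d * b * (a / b) = d * a by field; rewrite b0.
  exact: (srM hA hd ha).
by rewrite mulrAC; apply: (srM hA (hdy z hz) hb).
Qed.

Lemma key (C : set (set K)) (P : set K) (O : set (set K)) :
  C `<=` Max R -> maximal_ideal R P ->
  Crit (overring R C) (ideal_ext (overring R C) P) ->
  maxspace_open R O -> O P -> exists Q, C Q /\ O Q /\ Q <> P.
Proof.
move=> hCM hP [hPT hcrit] hO hOP.
set T := overring R C.
have hCp : forall Q, C Q -> prime_ideal R Q by move=> Q hQ; exact: (max_prime hR (hCM Q hQ)).
have hT : subring T.
  split; first by move=> Q hQ; exact: (sr0 (loc_subring hR (hCp Q hQ))).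
  split; first by move=> Q hQ; exact: (sr1 (loc_subring hR (hCp Q hQ))).
  split.
    by move=> x y hx hy Q hQ; exact: (srB (loc_subring hR (hCp Q hQ)) (hx Q hQ) (hy Q hQ)).
  by move=> x y hx hy Q hQ; exact: (srM (loc_subring hR (hCp Q hQ)) (hx Q hQ) (hy Q hQ)).
have hRT : R `<=` T by move=> x hx Q hQ; exact: (loc_sub hR (hCp Q hQ) hx).
have hPi : ideal R P by case: hP.
have hPTi : ideal T (ideal_ext T P) by case: hPT.
have hxp : forall x p, T x -> P p -> ideal_ext T P (x * p).
  move=> x p hx hp; exists [:: (x, p)]; split; last by rewrite big_seq1.
  by move=> z; rewrite inE => /eqP ->.
have hPsub : P `<=` ideal_ext T P.
  by move=> p hp; rewrite -(mul1r p); apply: hxp => //; exact: (sr1 hT).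
have [v [vM [vD [vt vloc]]]] := hAD hP.
have [t [hPt [t0 vt1]]] := unif hR hP vM vt vloc.
have hTloc : T `<=` localization R P.
  move=> x hx; apply: contrapT => hnx.
  have hv : ~ (x = 0 \/ 0 <= v x) by move=> /vloc.
  have x0 : x != 0 by apply/eqP => e; apply: hv; left.
  have vxn : v x < 0 by rewrite ltNge; apply/negP => h; apply: hv; right.
  have hvi : 0 <= v x^-1 by rewrite (vV vM x0); rewrite oppr_ge0 ltW.
  have [p [s [hp [hs [hPs ei]]]]] := loc_of_v vloc hvi.
  have s0 : s != 0 by apply: (notin_ne0 hPi hPs).
  have ep : p = x^-1 * s by rewrite ei mulfVK.
  have p0 : p != 0 by rewrite ep mulf_neq0 // invr_eq0.
  have hPp : P p.
    apply: contrapT => hnp; have := v_unit hR hP vM vloc hp hnp.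
    rewrite ep vM ?invr_eq0 // (v_unit hR hP vM vloc hs hPs) (vV vM x0) addr0.
    by move=> e; move: vxn; rewrite -oppr_gt0 e ltxx.
  have es : s = x * p by rewrite ep mulrA mulfV // mul1r.
  have hPTs : ideal_ext T P s by rewrite es; apply: hxp.
  have [m [r [hm [hr e1]]]] := max_elt hR hP hs hPs.
  have hPT1 : ideal_ext T P 1.
    rewrite e1; apply: (idlD hPTi); first exact: hPsub.
    exact: (idlM hPTi (hRT r hr) hPTs).
  by have [_ [hne _]] := hPT; apply: hne; apply: (idl_one hPTi).
have vPT : forall z, ideal_ext T P z -> vge v 1 z.
  move=> z [s [hs ->]]; apply: (vge_sum vD) => w hw.
  have [h1 h2] := hs w hw; rewrite -[1]add0r; apply: (vge_mul vM).
    exact: (vge_loc vloc (hTloc _ h1)).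
  exact: (vge_M hR hP vM vloc h2).
have vPT2 : forall z, ideal_sq (ideal_ext T P) z -> vge v 2 z.
  move=> z [s [hs ->]]; apply: (vge_sum vD) => w hw.
  have [h1 h2] := hs w hw; have -> : (2 : int) = 1 + 1 by [].
  by apply: (vge_mul vM); apply: vPT.
apply: contrapT => hno.
have hH : forall Q, C Q -> O Q -> Q = P.
  move=> Q hQ hOQ; apply: contrapT => hne; apply: hno; by exists Q.
have [xs [hxs hxsO]] := maxopen_char hR hO hOP.
have htxsT : forall x, x \in t :: xs -> T x.
  move=> x; rewrite inE => /orP[/eqP ->|hx]; first exact: (hRT _ (idl_sub hPi hPt)).
  exact: (hRT _ (hxs x hx).1).
have hJ := idg_ideal hT htxsT.
have hJfin : fin_gen T (ideal_gen T (t :: xs)) by exists (t :: xs).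
have hJsub : ideal_gen T (t :: xs) `<=` ideal_ext T P.
  apply: (idg_le hPTi) => x; rewrite inE => /orP[/eqP ->|hx]; first exact: hPsub.
  exact: (hPsub _ (hxs x hx).2).
have [N [hN hJN]] := hcrit _ hJ hJfin hJsub.
have hNi : ideal T N by case: hN.
have hNsq : ideal_sq N `<=` N.
  move=> z [s [hs ->]]; apply: (idl_sum hNi) => w hw.
  have [h1 h2] := hs w hw; exact: (idlMr hNi (idl_sub hNi h2) h1).
have htN : N t by apply: hNsq; apply: hJN; apply: (idg_mem hT); exact: mem_head.
have hxsN : forall x, x \in xs -> N x.
  by move=> x hx; apply: hNsq; apply: hJN; apply: (idg_mem hT); rewrite inE hx orbT.
have [p0 [hp0 hNp0]] : exists p0, P p0 /\ ~ N p0.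
  apply: contrapT => hno2.
  have hPN : P `<=` N by move=> p hp; apply: contrapT => hn; apply: hno2; exists p.
  have hPTN : ideal_ext T P `<=` N.
    move=> z [s [hs ->]]; apply: (idl_sum hNi) => w hw.
    have [h1 h2] := hs w hw; exact: (idlM hNi h1 (hPN _ h2)).
  have [_ [_ hmaxPT]] := hPT.
  case: (hmaxPT N hNi hPTN) => e.
    have : ideal_sq N t by apply: hJN; apply: (idg_mem hT); exact: mem_head.
    rewrite e => /vPT2 [e0|]; first by move: t0; rewrite e0 eqxx.
    by rewrite vt1.
  by have [_ [hne _]] := hN; apply: hne.
have p00 : p0 != 0 by apply/eqP => e; apply: hNp0; rewrite e; exact: (idl0 hNi).
have vp0 := v_M hR hP vM vloc hp0 p00.
have hv0 : 0 <= v (p0 / t) by rewrite (vdiv vM p00 t0) vt1 subr_ge0.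
have [a [b [ha [hb [hPb e]]]]] := loc_of_v vloc hv0.
have b0 : b != 0 by apply: (notin_ne0 hPi hPb).
have e2 : p0 * b = a * t.
  have e1 : p0 = a / b * t by rewrite -e mulfVK.
  by rewrite e1; field; rewrite b0.
have hNp := max_prime hT hN.
have hp0R : R p0 := idl_sub hPi hp0.
have hNb : N b.
  have hNab : N (p0 * b) by rewrite e2; exact: (idlM hNi (hRT a ha) htN).
  have [_ [_ hpr]] := hNp.
  by case: (hpr _ _ (hRT _ hp0R) (hRT _ hb) hNab).
pose J0 := b :: xs.
have hJ0R : forall y, y \in J0 -> R y.
  by move=> y; rewrite inE => /orP[/eqP ->//|hy]; exact: (hxs y hy).1.
have hJ0T : forall y, y \in J0 -> T y by move=> y /hJ0R /hRT.
have hJ0C : forall Q, C Q -> exists y, y \in J0 /\ ~ Q y.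
  move=> Q hQ; apply: contrapT => hno3.
  have hall : forall y, y \in J0 -> Q y.
    move=> y hy; apply: contrapT => hQy; apply: hno3; by exists y.
  have hOQ : O Q by apply: (hxsO Q (hCM Q hQ)) => x hx; apply: hall; rewrite inE hx orbT.
  have eQ := hH Q hQ hOQ.
  by apply: hPb; rewrite -eQ; apply: hall; exact: mem_head.
have hIdg := idg_ideal hT hJ0T.
pose L := [set r | R r /\ ideal_gen T J0 r].
have hL : ideal R L.
  split; first by move=> r [].
  split; first by split; [exact: (sr0 hR)|exact: (idl0 hIdg)].
  split; first by move=> x y [hx hx'] [hy hy']; split; [exact: (srD hR hx hy)|exact: (idlD hIdg hx' hy')].
  by move=> c x hc [hx hx']; split; [exact: (srM hR hc hx)|exact: (idlM hIdg (hRT c hc) hx')].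
have hJ0N : ideal_gen T J0 `<=` N.
  apply: (idg_le hNi) => y; rewrite inE => /orP[/eqP ->//|hy]; exact: hxsN.
case: (pselect (L 1)) => hL1.
  have hN1 : N 1 by apply: hJ0N; case: hL1.
  by have [_ [hne _]] := hN; apply: hne; apply: (idl_one hNi).
have [M [hM hLM]] := krull hR hL hL1.
have [w [wM [wD [wt wloc]]]] := hAD hM.
have [g [hg [g0 hgmin]]] := min_elt w (ex_intro _ b (conj (mem_head _ _) b0) : exists y, y \in J0 /\ y != 0).
have hyg : forall z, z \in [seq y / g | y <- J0] -> localization R M z.
  move=> z /mapP [y hy ->]; apply/wloc.
  case: (hgmin y hy) => [->|h]; first by left; rewrite mul0r.
  case: (eqVneq y 0) => [->|y0]; first by left; rewrite mul0r.
  by right; rewrite (vdiv wM y0 g0) subr_ge0.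
have [d [hd [hMd hdy]]] := common_denom hR (max_prime hR hM) hyg.
have heT : T (d / g).
  move=> Q hQ; have [y [hy hQy]] := hJ0C Q hQ.
  have y0 : y != 0 by apply/eqP => e0; apply: hQy; rewrite e0; case: (hCp Q hQ) => hQi _; exact: (idl0 hQi).
  have hdyR : R (d / g * y).
    have := hdy (y / g) (map_f _ hy); by rewrite mulrA mulrAC.
  exists (d / g * y), y; split=> //; split; first exact: hJ0R.
  by split=> //; rewrite mulfK.
have hdL : L d.
  split=> //; have -> : d = d / g * g by rewrite mulfVK.
  exact: (idlM hIdg heT (idg_mem hT hg)).
by apply: hMd; apply: hLM.
Qed.

End AD.

Section PartB.
Variable K : fieldType.
Variable R : set K.
Hypothesis hR : subring R.
Hypothesis hAD : almost_dedekind R.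

Lemma pred_unique (I : Type) (lt : I -> I -> Prop) j j' i :
  (forall x y, lt x y \/ x = y \/ lt y x) ->
  is_pred_of lt j i -> is_pred_of lt j' i -> j = j'.
Proof.
move=> htot [hj hjn] [hj' hjn']; case: (htot j j') => [h|[//|h]].
  by exfalso; apply: hjn; exists j'.
by exfalso; apply: hjn'; exists j.
Qed.

Lemma partB : scattered (Max R) (maxspace_open R) -> SP_scattered R.
Proof.
move=> [I [lt [D [i0 [[wf [htr htot]] [hds hD0]]]]]].
have hDc : forall i, D i `<=` Max R /\ closedR R (D i).
  apply: (well_founded_ind wf) => i IH.
  have [hsucc hlim] := hds i.
  case: (pselect (exists j, is_pred_of lt j i)) => [[j hj]|hnp].
    have [hjM hjc] := IH j hj.1.
    rewrite (hsucc j hj); split; first by move=> x [/hjM].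
    move=> x hx hnd.
    case: (pselect (D j x)) => hCx; last first.
      have [O [hO [hOx hOs]]] := hjc x hx hCx.
      by exists O; split=> //; split=> // y hy [hCy _]; apply: (hOs y hy).
    have [O [hO [hOx hOy]]] : exists O, isopenR R O /\ O x /\ forall y, D j y -> O y -> y = x.
      apply: contrapT => hno; apply: hnd; split=> // O hO hOx.
      apply: contrapT => hno2; apply: hno; exists O; split=> //; split=> // y hCy hOy.
      apply: contrapT => hyx; apply: hno2; by exists y.
    exists O; split=> //; split=> // y hy hdy.
    have e := hOy y hdy.1 hy; apply: hnd; by rewrite -e.
  rewrite (hlim hnp); split; first by move=> x [].
  move=> x hx hnD.
  have [j [hj hjx]] : exists j, lt j i /\ ~ D j x.
    apply: contrapT => hno; apply: hnD; split=> // j hj; apply: contrapT => hjx.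
    by apply: hno; exists j.
  have [O [hO [hOx hOs]]] := (IH j hj).2 x hx hjx.
  by exists O; split=> //; split=> // y hy [_ hyD]; apply: (hOs y hy); apply: hyD.
pose Cstep (i : I) (rec : forall j, lt j i -> set (set K)) : set (set K) :=
  match pselect (exists j, is_pred_of lt j i) with
  | left h => [set P | maximal_ideal R P /\
      Crit (overring R (rec (proj1_sig (cid h)) (proj2_sig (cid h)).1))
           (ideal_ext (overring R (rec (proj1_sig (cid h)) (proj2_sig (cid h)).1)) P)]
  | right _ => [set P | maximal_ideal R P /\ forall j (hj : lt j i), rec j hj P]
  end.
pose Cf := Fix wf (fun _ => set (set K)) Cstep.
have Cext : forall i (f g : forall j, lt j i -> set (set K)),
    (forall j p, f j p = g j p) -> Cstep i f = Cstep i g.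
  move=> i f g hfg; rewrite /Cstep; case: pselect => h; first by rewrite !hfg.
  by apply/seteqP; split=> P [hP hall]; split=> // j hj; [rewrite -hfg|rewrite hfg]; apply: hall.
have CfE : forall i, Cf i = Cstep i (fun j _ => Cf j).
  by move=> i; rewrite /Cf Fix_eq //; exact: Cext.
have hcs : crit_seq R lt Cf.
  move=> i; split.
    move=> j hj; rewrite CfE /Cstep; case: pselect => h; last by exfalso; apply: h; exists j.
    have ej : proj1_sig (cid h) = j by apply: (pred_unique htot (proj2_sig (cid h)) hj).
    by rewrite /= ej.
  move=> hnp; rewrite CfE /Cstep; case: pselect => h; first by exfalso.
  by [].
have hCM : forall i, Cf i `<=` Max R.
  move=> i P; have [hs hl] := hcs i.
  case: (pselect (exists j, is_pred_of lt j i)) => [[j hj]|hnp].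
    by rewrite (hs j hj) => -[].
  by rewrite (hl hnp) => -[].
have hCD : forall i, Cf i `<=` D i.
  apply: (well_founded_ind wf) => i IH.
  have [hsucc hlim] := hds i; have [csucc clim] := hcs i.
  case: (pselect (exists j, is_pred_of lt j i)) => [[j hj]|hnp].
    rewrite (hsucc j hj) (csucc j hj) => P [hP hcrit].
    have hk := key hR hAD (hCM j) hP hcrit.
    have hIH := IH j hj.1.
    have hDjP : D j P.
      apply: contrapT => hn.
      have [O [hO [hOP hOs]]] := (hDc j).2 P hP hn.
      have [Q [hQ [hOQ _]]] := hk O hO hOP.
      by apply: (hOs Q hOQ); apply: hIH.
    split=> // O hO hOP; have [Q [hQ [hOQ hne]]] := hk O hO hOP.
    by exists Q; split; [apply: hIH|split].
  rewrite (hlim hnp) (clim hnp) => P [hP hall]; split=> // j hj.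
  by apply: IH => //; apply: hall.
exists I, lt, Cf, i0; split; first by split=> //; split.
split=> //; apply/seteqP; split=> // P hP.
by rewrite -hD0; apply: hCD.
Qed.

End PartB.

Theorem proposition5p5 (K : fieldType) (R : set K) :
  subring R -> is_frac_field R -> almost_dedekind R ->
  (countable_set (Max R) -> scattered (Max R) (maxspace_open R)) /\
  (scattered (Max R) (maxspace_open R) -> SP_scattered R).
Proof.
move=> hR _ hAD; split; [exact: (partA hR hAD)|exact: (partB hR hAD)].
Qed.
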